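(* Let $M$ be a multiset of $m$ elements distributed over $p'$ PEs such that each PE holds $\bar m=m/p'$ elements which are pairwise distinct on that PE. Each distinct element $e$ of $M$ is assigned independently and uniformly at random to one of the $p'$ PEs, and every occurrence of $e$ is sent to that PE. Let $X$ be the maximum number of elements (counted with multiplicity) received by a PE. For $k\ge1$ and $\bar m=\omega(k^2p'\log p)$ with $p\ge p'$, we have $\Pr[X>\bar m(1+1/k)]\le 1/p^{\omega(1)}$.
   Context: Asymptotic notation is with respect to $p\to\infty$. *)

(* Defs.v *)
From HB Require Import structures.
From mathcomp Require Import all_boot all_order all_algebra.
From mathcomp Require Import reals exp.
Set Implicit Arguments. Unset Strict Implicit. Unset Printing Implicit Defensive.
Import Order.TTheory GRing.Theory Num.Theory.
Local Open Scope ring_scope.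

(* PE i holds the set [S i] of (pairwise distinct)
   elements of the universe T.  A random assignment is h : {ffun T -> 'I_p'};
   every occurrence of element e is sent to PE (h e). *)

Definition load (p' : nat) (T : finType) (S : 'I_p' -> {set T})
  (h : {ffun T -> 'I_p'}) (j : 'I_p') : nat :=
  (\sum_(i < p') #|[set e in S i | h e == j]|)%N.

Definition maxload (p' : nat) (T : finType) (S : 'I_p' -> {set T})
  (h : {ffun T -> 'I_p'}) : nat :=
  (\max_(j < p') load S h j)%N.

(* Pr[X > mbar (1 + 1/k)] where h is uniform over all functions T -> 'I_p'
   (i.e. each element independently and uniformly assigned to a PE). *)
Definition overload_prob (R : realType) (p' : nat) (T : finType)
  (S : 'I_p' -> {set T}) (mbar : nat) (k : R) : R :=
  (#|[set h : {ffun T -> 'I_p'} |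
        mbar%:R * (1 + k^-1) < (maxload S h)%:R]|)%:R
  / (#|{ffun T -> 'I_p'}|)%:R.

(* Main.v *)
Require Import Defs.
From HB Require Import structures.
From mathcomp Require Import all_boot all_order all_algebra.
From mathcomp Require Import reals exp sequences.
From mathcomp Require Import ring lra.
Import Order.TTheory GRing.Theory Num.Theory.
Set Implicit Arguments. Unset Strict Implicit.
Local Open Scope ring_scope.

Lemma expR_le2 (R : realType) (y : R) : 0 <= y -> y <= 1/2 ->
  expR y <= 1 + y + 2 * y ^+ 2.
Proof.
move=> y0 y1.
have f1 := expR_ge1Dx (- y).
have ef := expRxMexpNx_1 y.
have e0 := expR_ge0 y.
set e := expR y in ef e0 *; set f := expR (- y) in f1 ef *.
have hQ : 1 <= (1 - y) * (1 + y + 2 * y ^+ 2) by nra.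
have hQ0 : 0 <= 1 + y + 2 * y ^+ 2 by nra.
have h1 : e <= e * ((1 - y) * (1 + y + 2 * y ^+ 2)) by nra.
have h2 : e * ((1 - y) * (1 + y + 2 * y ^+ 2)) <= e * (f * (1 + y + 2 * y ^+ 2)).
  apply: ler_wpM2l => //; apply: ler_wpM2r => //; lra.
by apply: (le_trans h1); apply: (le_trans h2); rewrite mulrA ef mul1r.
Qed.

Section Comb.
Variables (p' : nat) (T : finType) (S : 'I_p' -> {set T}).

Definition cnt (e : T) : nat := #|[set i | e \in S i]|.

Lemma load_eq h j : load S h j = (\sum_e (h e == j) * cnt e)%N.
Proof.
rewrite /load.
rewrite (eq_bigr (fun i => \sum_e ((e \in S i) && (h e == j)))%N); last by move=> i _; rewrite -sum1_card big_mkcond /=; apply: eq_bigr => e _; rewrite !inE.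
rewrite exchange_big /=; apply: eq_bigr => e _.
rewrite /cnt -sum1_card big_distrr /= [RHS]big_mkcond /=; apply: eq_bigr => i _ /=.
by rewrite inE muln1; case: (e \in S i); case: (h e == j).
Qed.

Lemma sum_cnt mbar : (forall i, #|S i| = mbar) -> (\sum_e cnt e = p' * mbar)%N.
Proof.
move=> hS; rewrite /cnt.
rewrite (eq_bigr (fun e => \sum_(i < p') (e \in S i))%N); last first.
  by move=> e _; rewrite -sum1_card big_mkcond /=; apply: eq_bigr => i _; rewrite inE.
rewrite exchange_big /=.
transitivity (\sum_(i < p') mbar)%N; last by rewrite sum_nat_const card_ord.
apply: eq_bigr => i _; rewrite -(hS i) -sum1_card [RHS]big_mkcond /=.
by apply: eq_bigr => e _; case: (e \in S i).
Qed.

Lemma cnt_le e : (cnt e <= p')%N.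
Proof. by rewrite /cnt -[X in (_ <= X)%N]card_ord max_card. Qed.
End Comb.

Section MGF.
Variables (R : realType) (p' : nat) (T : finType) (S : 'I_p' -> {set T}).

Lemma mgf (l : R) j : \sum_(h : {ffun T -> 'I_p'}) expR (l * (load S h j)%:R)
  = \prod_e ((p'.-1)%:R + expR (l * (cnt S e)%:R)).
Proof.
have E : forall e, (p'.-1)%:R + expR (l * (cnt S e)%:R) =
    \sum_(j' < p') expR (l * ((j' == j) * cnt S e)%N%:R).
  move=> e; rewrite (bigD1 j) //= eqxx mul1n addrC; congr (_ + _).
  rewrite (eq_bigr (fun _ => 1)); last first.
    by move=> i /negbTE ->; rewrite mul0n mulr0 expR0.
  rewrite sumr_const; congr (_ %:R).
  by rewrite -[in LHS](card_ord p') -(cardC1 j); apply: eq_card => i; rewrite !inE.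
under [RHS]eq_bigr => e _ do rewrite E.
rewrite bigA_distr_bigA /=; apply: eq_bigr => h _.
by rewrite load_eq natr_sum mulr_sumr expR_sum.
Qed.

Lemma factor_bound (l : R) c : (0 < p')%N -> 0 <= l -> 2 * l * p'%:R <= 1 -> (c <= p')%N ->
  (p'.-1)%:R + expR (l * c%:R) <=
  p'%:R * expR (l * c%:R * (1 + 2 * l * p'%:R) / p'%:R).
Proof.
move=> hp l0 hl hc.
have hp0 : (0 : R) < p'%:R by rewrite ltr0n.
have hc0 : (0 : R) <= c%:R by [].
have hcp : (c%:R : R) <= p'%:R by rewrite ler_nat.
have y0 : 0 <= l * c%:R by rewrite mulr_ge0.
have ylp : l * c%:R <= l * p'%:R by rewrite ler_wpM2l.
have y1 : l * c%:R <= 1/2 by lra.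
have ey := expR_le2 y0 y1.
have ge := expR_ge1Dx (l * c%:R * (1 + 2 * l * p'%:R) / p'%:R).
have -> : (p'.-1)%:R = p'%:R - 1 :> R by rewrite -[in RHS](prednK hp) -natr1 addrK.
apply: (@le_trans _ _ (p'%:R * (1 + l * c%:R * (1 + 2 * l * p'%:R) / p'%:R))); last first.
  by rewrite ler_wpM2l // ltW.
rewrite mulrDr mulr1 mulrCA mulrA mulfK ?gt_eqF //.
have : l * c%:R * (l * c%:R) <= l * c%:R * (l * p'%:R) by rewrite ler_wpM2l.
move: ey; rewrite expr2; nra.
Qed.

Lemma prod_bound (l : R) mbar : (0 < p')%N -> 0 <= l -> 2 * l * p'%:R <= 1 ->
  (forall i, #|S i| = mbar) ->
  \prod_e ((p'.-1)%:R + expR (l * (cnt S e)%:R)) <=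
  (p' ^ #|T|)%:R * expR (l * mbar%:R * (1 + 2 * l * p'%:R)).
Proof.
move=> hp l0 hl hS.
apply: (@le_trans _ _ (\prod_e (p'%:R * expR (l * (cnt S e)%:R * (1 + 2 * l * p'%:R) / p'%:R)))).
  apply: ler_prod => e _; apply/andP; split.
    by rewrite addr_ge0 // expR_ge0.
  by apply: factor_bound => //; apply: cnt_le.
rewrite big_split /= prodr_const -expR_sum natrX.
apply: ler_wpM2l; first by rewrite exprn_ge0.
rewrite ler_expR -!mulr_suml -mulr_sumr -natr_sum (sum_cnt hS) natrM.
have hp0 : (p'%:R : R) != 0 by rewrite pnatr_eq0 -lt0n.
by rewrite le_eqVlt; apply/orP; left; apply/eqP; field.
Qed.

Lemma chernoff (l t : R) mbar : (0 < p')%N -> 0 <= l -> 2 * l * p'%:R <= 1 ->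
  (forall i, #|S i| = mbar) ->
  (#|[set h : {ffun T -> 'I_p'} | t < (maxload S h)%:R]|)%:R <=
  p'%:R * ((p' ^ #|T|)%:R * expR (l * mbar%:R * (1 + 2 * l * p'%:R) - l * t)) :> R.
Proof.
move=> hp l0 hl hS.
rewrite -sum1_card natr_sum big_mkcond /=.
apply: (@le_trans _ _ (\sum_(h : {ffun T -> 'I_p'}) \sum_(j < p')
          expR (l * (load S h j)%:R - l * t))).
  apply: ler_sum => h _; rewrite inE; case: ifP => hA; last first.
    by apply: sumr_ge0 => j _; apply: expR_ge0.
  have hI : (0 < #|'I_p'|)%N by rewrite card_ord.
  have [j0 hj0] := bigop.eq_bigmax (fun j => load S h j) hI.
  rewrite (bigD1 j0) //=.
  apply: (@le_trans _ _ (expR (l * (load S h j0)%:R - l * t))).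
    have := expR_ge1Dx (l * (load S h j0)%:R - l * t).
    move: hA; rewrite /maxload hj0 => hA.
    have : 0 <= l * ((load S h j0)%:R - t) by rewrite mulr_ge0 // subr_ge0 ltW.
    rewrite mulrBr; lra.
  by rewrite lerDl; apply: sumr_ge0 => j _; apply: expR_ge0.
rewrite exchange_big /=.
set X := (_ * expR _).
have -> : p'%:R * X = \sum_(j < p') X by rewrite sumr_const card_ord mulr_natl.
apply: ler_sum => j _.
under eq_bigr => h _ do rewrite expRB.
rewrite -mulr_suml mgf /X expRB mulrA ler_pM2r ?invr_gt0 ?expR_gt0 //.
exact: prod_bound.
Qed.
End MGF.

Theorem lemma21 (R : realType) :
  forall C : nat, exists (K : R) (P0 : nat),
  forall (p p' : nat) (T : finType) (S : 'I_p' -> {set T}) (mbar : nat) (k : R),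
    (P0 <= p)%N -> (0 < p')%N -> (p' <= p)%N -> 1 <= k ->
    (forall i, #|S i| = mbar) ->
    K * k ^+ 2 * p'%:R * ln (p%:R : R) <= mbar%:R ->
    overload_prob S mbar k <= (p%:R : R) ^- C.
Proof.
move=> C; exists (8 * (C.+1)%:R), 1%N => p p' T S mbar k hp1 hp hpp hk hS hK.
have k0 : 0 < k by lra.
have pp0 : (0 : R) < p'%:R by rewrite ltr0n.
have p0 : (0 : R) < p%:R by rewrite ltr0n.
have ppp : (p'%:R : R) <= p%:R by rewrite ler_nat.
set l := (4 * k * p'%:R)^-1.
have l0 : 0 <= l by rewrite invr_ge0 !mulr_ge0 // ltW.
have hl : 2 * l * p'%:R <= 1.
  have -> : 2 * l * p'%:R = 1 / (2 * k).
    by rewrite /l; field; rewrite !gt_eqF.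
  rewrite ler_pdivrMr ?mulr_gt0 //; lra.
have := chernoff (mbar%:R * (1 + k^-1)) hp l0 hl hS.
rewrite /overload_prob card_ffun card_ord => hc.
have N0 : (0 : R) < (p' ^ #|T|)%:R by rewrite ltr0n expn_gt0 hp.
apply: (@le_trans _ _ (p'%:R * expR (l * mbar%:R * (1 + 2 * l * p'%:R) -
           l * (mbar%:R * (1 + k^-1))))).
  rewrite ler_pdivrMr //; apply: (le_trans hc); rewrite le_eqVlt; apply/orP; left; apply/eqP.
  ring.
set E := (l * mbar%:R * _ - _).
have -> : E = - (mbar%:R / (8 * k ^+ 2 * p'%:R)).
  by rewrite /E /l; field; rewrite !gt_eqF.
have hE : (C.+1)%:R * ln (p%:R : R) <= mbar%:R / (8 * k ^+ 2 * p'%:R).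
  rewrite ler_pdivlMr ?mulr_gt0 ?exprn_gt0 //.
  by apply: (le_trans _ hK); rewrite le_eqVlt; apply/orP; left; apply/eqP; ring.
apply: (@le_trans _ _ (p%:R * expR (- ((C.+1)%:R * ln (p%:R : R))))).
  apply: ler_pM; [exact: ltW | exact: expR_ge0 | exact: ppp | by rewrite ler_expR lerN2].
rewrite expRN (mulr_natl (ln _)) -lnXn // lnK ?posrE ?exprn_gt0 //.
rewrite exprS invfM mulrA mulfV ?gt_eqF // mul1r.
by [].
Qed.
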